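(* Let $\mathbf{k}$ be a commutative noetherian ring, $M\ge0$, and let $I\subseteq\mathcal{P}_M$ be an ideal. Then $\mathrm{init}(I)$ is a monomial ideal of $\mathcal{P}_M$.
   Context: Notation: $\mathcal{P}_{d,n}=(\bigwedge^d\mathbf{k}^{Md})^{\otimes n}$, $\mathcal{P}_M=\bigoplus_{d,n\ge0}\mathcal{P}_{d,n}$, with standard basis $v_1,\dots,v_{Md}$ of $\mathbf{k}^{Md}$ and $v_S=v_{s_1}\wedge\cdots\wedge v_{s_d}$ for $S=\{s_1<\dots<s_d\}\subseteq[Md]$; monomials are $c\,v_{S^1}\otimes\cdots\otimes v_{S^n}$, $c\in\mathbf k$. Products: for a split $\sigma=(A,B)$ of $[n+m]$ (complementary subsets $A=\{i_1<\dots<i_n\}$, $B=\{j_1<\dots<j_m\}$), $(u_1\otimes\cdots\otimes u_n)\cdot_\sigma(w_1\otimes\cdots\otimes w_m)=z_1\otimes\cdots\otimes z_{n+m}$ with $z_{i_k}=u_k$, $z_{j_k}=w_k$ (bilinear; $0$ if bidegrees do not fit). For $g$ a strictly increasing map $\mathbf N\to\mathbf N$ and $f\in\mathcal{P}_{d,n}$, $h\in\mathcal{P}_{e,n}$: $f\ast_g h=0$ unless $g([Md])\subseteq[M(d+e)]$, in which case with $g^c:[Me]\to[M(d+e)]$ the increasing bijection onto $[M(d+e)]\setminus g([Md])$, $(v_{S^1}\otimes\cdots\otimes v_{S^n})\ast_g(v_{T^1}\otimes\cdots\otimes v_{T^n})=\bigotimes_i (v_{g(s^i_1)}\wedge\cdots\wedge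 v_{g(s^i_d)}\wedge v_{g^c(t^i_1)}\wedge\cdots\wedge v_{g^c(t^i_e)})$ (bilinear; $0$ for different numbers of tensor factors). An ideal is a $\mathbf{k}$-submodule $I=\bigoplus_{d,n}(I\cap\mathcal{P}_{d,n})$ with $f\ast_g h\in I$ and $h\cdot_\sigma f\in I$ for all $f\in I$, $h\in\mathcal P$, $g$, $\sigma$; a monomial ideal is an ideal generated by monomials. Monomial order: encode the basis monomial $v_{S^1}\otimes\cdots\otimes v_{S^n}$ of bidegree $(d,n)$ as the element $(S^1,\dots,S^n)\in(\mathbf{Z}^d)^n$, each $S^i$ written as its increasing sequence of entries; order $\mathbf Z^d$ lexicographically and then $(\mathbf Z^d)^n$ lexicographically; call this total order $\preceq$ (only monomials of the same bidegree are compared). For $f\in\mathcal{P}_{d,n}$ nonzero, $\mathrm{init}(f)$ is the $\preceq$-largest basis monomial occurring in $f$ with nonzero coefficient, together with that coefficient. For an ideal $I$, $\mathrm{init}(I)$ is the $\mathbf k$-span of $\{\mathrm{init}(f): f\in I\cap\mathcal P_{d,n}$ for some $d,n\}$. *)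

(* Defs.v *)
From HB Require Import structures.
From mathcomp Require Import all_boot all_order all_algebra.
Set Implicit Arguments. Unset Strict Implicit. Unset Printing Implicit Defensive.
Import Order.TTheory GRing.Theory Num.Theory.
Local Open Scope ring_scope.

Definition ring_ideal (k : comPzRingType) (J : k -> Prop) : Prop :=
  [/\ J 0, (forall x y, J x -> J y -> J (x + y)) & (forall a x, J x -> J (a * x))].

Definition noetherian (k : comPzRingType) : Prop :=
  forall J : nat -> k -> Prop,
    (forall i, ring_ideal (J i)) ->
    (forall i x, J i x -> J i.+1 x) ->
    exists N : nat, forall i, (N <= i)%N -> forall x, J i x -> J N x.

(* indices of k^{Md} are 0-based: 'I_(M*d) stands for [Md] = {1,..,Md} *)
Definition dsub (M d : nat) := {S : {set 'I_(M * d)} | #|S| == d}.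
(* basis monomials v_{S^1} (x) ... (x) v_{S^n} of P_{d,n} *)
Definition Bas (M d n : nat) := {ffun 'I_n -> dsub M d}.
(* elements of P_{d,n}: coefficient vectors on the (finite) standard basis *)
Definition Pol (k : comPzRingType) (M d n : nat) := {ffun Bas M d n -> k}.

Section Ops.
Variables (k : comPzRingType) (M : nat).

Definition padd d n (f h : Pol k M d n) : Pol k M d n := [ffun b => f b + h b].
Definition pscale d n (a : k) (f : Pol k M d n) : Pol k M d n := [ffun b => a * f b].
Definition pzero d n : Pol k M d n := [ffun => 0].
Definition monom d n (c : k) (m : Bas M d n) : Pol k M d n :=
  [ffun b => if b == m then c else 0].

(* i_A : 'I_n -> 'I_(n+m) the increasing enumeration of A (meaningful when #|A| = n),
   j_B : 'I_m -> 'I_(n+m) the increasing enumeration of the complement B *)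
Definition iA n m (A : {set 'I_(n + m)}) (x : 'I_n) : 'I_(n + m) :=
  nth (lshift m x) (enum A) x.
Definition jB n m (A : {set 'I_(n + m)}) (x : 'I_m) : 'I_(n + m) :=
  nth (rshift n x) (enum (~: A)) x.
(* (u_1..u_n) ._sigma (w_1..w_m) = z with z_{i_k} = u_k, z_{j_k} = w_k; since
   this is a bijection of bases, the coefficient of z in the bilinear extension is
   (coefficient of z o i_A in the left factor) * (coefficient of z o j_B in the right) *)
Definition psplit d n m (A : {set 'I_(n + m)}) (u : Pol k M d n) (w : Pol k M d m)
  : Pol k M d (n + m) :=
  [ffun z : Bas M d (n + m) =>
     u [ffun x => z (iA A x)] * w [ffun x => z (jB A x)]].

Lemma le_Md_Mde d e : (M * d <= M * (d + e))%N.
Proof. by rewrite leq_mul2l leq_addr orbT. Qed.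
Lemma le_Me_Mde d e : (M * e <= M * (d + e))%N.
Proof. by rewrite leq_mul2l leq_addl orbT. Qed.

Definition gfits (g : nat -> nat) d e : bool :=
  [forall x : 'I_(M * d), (g x < M * (d + e))%N].
Definition gI (g : nat -> nat) d e (x : 'I_(M * d)) : 'I_(M * (d + e)) :=
  insubd (widen_ord (le_Md_Mde d e) x) (g x).
Definition gimg (g : nat -> nat) d e : {set 'I_(M * (d + e))} :=
  [set @gI g d e x | x : 'I_(M * d)].
(* g^c : the increasing bijection [Me] -> [M(d+e)] \ g([Md]) *)
Definition gcI (g : nat -> nat) d e (t : 'I_(M * e)) : 'I_(M * (d + e)) :=
  nth (widen_ord (le_Me_Mde d e) t) (enum (~: @gimg g d e)) t.

Definition wimg (g : nat -> nat) d e (S : dsub M d) (T : dsub M e)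
  : {set 'I_(M * (d + e))} :=
  [set @gI g d e s | s in val S] :|: [set @gcI g d e t | t in val T].
(* number of transpositions needed to sort g(s_1),..,g(s_d),g^c(t_1),..,g^c(t_e)
   increasingly (each block is already increasing) *)
Definition winv (g : nat -> nat) d e (S : dsub M d) (T : dsub M e) : nat :=
  #|[set st : 'I_(M * d) * 'I_(M * e) |
      [&& st.1 \in val S, st.2 \in val T & (@gcI g d e st.2 < @gI g d e st.1)%N]]|.

(* bilinear extension of
   (v_{S^i})_i *_g (v_{T^i})_i = (x)_i v_{g(S^i)} /\ v_{g^c(T^i)}
                              = (prod_i sign_i) v_{g(S^1) u g^c(T^1)} (x) ... ;
   zero unless g([Md]) is contained in [M(d+e)] *)
Definition pstar (g : nat -> nat) d e n (f : Pol k M d n) (h : Pol k M e n)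
  : Pol k M (d + e) n :=
  [ffun z : Bas M (d + e) n =>
    if @gfits g d e then
      \sum_(b1 : Bas M d n) \sum_(b2 : Bas M e n)
        (if [forall i, @wimg g d e (b1 i) (b2 i) == val (z i)]
         then (-1) ^+ (\sum_(i < n) @winv g d e (b1 i) (b2 i)) * f b1 * h b2
         else 0)
    else 0].

(* ----- ideals of P_M, given by their homogeneous components ----- *)
Definition PIdeal := forall d n : nat, Pol k M d n -> Prop.

Definition strictly_increasing (g : nat -> nat) : Prop :=
  forall x y, (x < y)%N -> (g x < g y)%N.

Definition is_ideal (I : PIdeal) : Prop :=
  [/\ (forall d n, I d n (pzero d n)),
      (forall d n f h, I d n f -> I d n h -> I d n (padd f h)),
      (forall d n a f, I d n f -> I d n (pscale a f)),
      (forall g d e n (f : Pol k M d n) (h : Pol k M e n),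
          strictly_increasing g -> I d n f -> I (d + e) n (pstar g f h)) &
      (forall d n m (A : {set 'I_(n + m)}) (h : Pol k M d n) (f : Pol k M d m),
          #|A| = n -> I d m f -> I d (n + m) (psplit A h f))].

Definition gen_ideal (G : PIdeal) : PIdeal :=
  fun d n f => forall J : PIdeal, is_ideal J ->
    (forall d' n' p, G d' n' p -> J d' n' p) -> J d n f.

Definition is_monomial d n (p : Pol k M d n) : Prop :=
  exists (c : k) (m : Bas M d n), p = monom c m.

Definition monomial_ideal (I : PIdeal) : Prop :=
  exists G : PIdeal, (forall d n p, G d n p -> is_monomial p) /\
    (forall d n f, I d n f <-> @gen_ideal G d n f).

Fixpoint lexlt (T : eqType) (lt : rel T) (s t : seq T) : bool :=
  match s, t with
  | _, [::] => false
  | [::], _ :: _ => true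
  | x :: s', y :: t' => lt x y || ((x == y) && lexlt lt s' t')
  end.

Definition bkey d n (b : Bas M d n) : seq (seq nat) :=
  [seq [seq nat_of_ord x | x <- enum (val (b i))] | i <- enum 'I_n].

Definition mlt d n (b b' : Bas M d n) : bool :=
  lexlt (lexlt ltn) (bkey b) (bkey b').

Definition is_lead d n (f : Pol k M d n) (m : Bas M d n) : Prop :=
  f m != 0 /\ forall m', f m' != 0 -> m' = m \/ mlt m' m.

Inductive kspan d n (S : Pol k M d n -> Prop) : Pol k M d n -> Prop :=
  | kspan0 : kspan S (pzero d n)
  | kspanS a x y : S x -> kspan S y -> kspan S (padd (pscale a x) y).

Definition init_ideal (I : PIdeal) : PIdeal :=
  fun d n => kspan (fun p => exists f m, I d n f /\ is_lead f m /\ p = monom (f m) m).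

End Ops.

(* Main.v *)
Require Import Defs.
From HB Require Import structures.
From mathcomp Require Import all_boot all_order all_algebra.
From mathcomp Require Import zify.
Set Implicit Arguments. Unset Strict Implicit. Unset Printing Implicit Defensive.

Lemma lexlt_irr (T : eqType) (lt : rel T) : irreflexive lt ->
  forall s, lexlt lt s s = false.
Proof. move=> H; elim=> //= x s ->; by rewrite H eqxx. Qed.

Lemma lexlt_ex (T : eqType) (lt : rel T) (x0 : T) s t : size s = size t -> lexlt lt s t ->
  exists i, [/\ (i < size s)%N, (i < size t)%N,
     (forall j, (j < i)%N -> nth x0 s j = nth x0 t j) & lt (nth x0 s i) (nth x0 t i)].
Proof.
elim: s t => [|x s IH] [|y t] //= [] /IH {}IH.
case/orP => [H|/andP[/eqP-> /IH[i [H1 H2 H3 H4]]]].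
  by exists 0%N; split.
exists i.+1; split=> //; case=> //= j /H3.
Qed.

Lemma ex_lexlt (T : eqType) (lt : rel T) (x0 : T) s t i :
  (i < size s)%N -> (i < size t)%N ->
  (forall j, (j < i)%N -> nth x0 s j = nth x0 t j) -> lt (nth x0 s i) (nth x0 t i) ->
  lexlt lt s t.
Proof.
elim: s t i => [|x s IH] [|y t] [|i] //=.
  by move=> _ _ _ ->.
move=> H1 H2 H3 H4; have := H3 0%N erefl => /= ->; rewrite eqxx /=.
apply/orP; right; apply: (IH _ i) => // j Hj; exact: (H3 j.+1).
Qed.

Lemma lexlt_natP (s t : seq nat) : sorted ltn s -> sorted ltn t -> size s = size t ->
  lexlt ltn s t <-> exists x, [/\ x \in s, x \notin t & forall y, (y < x)%N -> (y \in s) = (y \in t)].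
Proof.
elim: s t => [|x s IH] [|y t] //=.
- move=> _ _ _; split=> //; by case=> ? [].
- move=> Hs Ht [Hsz].
  move: Hs Ht; rewrite !(path_sortedE ltn_trans) => /andP[As Ss] /andP[At St].
  have sI := IH _ Ss St Hsz.
  case: (ltngtP x y) => Hxy /=.
  + split=> // _; exists x; split.
    * by rewrite inE eqxx.
    * rewrite inE negb_or; apply/andP; split; first by rewrite neq_ltn Hxy.
      apply/negP=> /(allP At); lia.
    * move=> z Hz; rewrite !inE.
      have ->: (z == x) = false by apply/negbTE; rewrite neq_ltn Hz.
      have ->: (z == y) = false by apply/negbTE; rewrite neq_ltn; lia.
      have ->: (z \in s) = false by apply/negbTE/negP=> /(allP As); lia.
      by have ->: (z \in t) = false by apply/negbTE/negP=> /(allP At); lia.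
  + split=> //; case=> w [Hw1 Hw2 Hw3].
    have Hyt : y \in y :: t by rewrite inE eqxx.
    have wx : (x <= w)%N.
      move: Hw1; rewrite inE => /orP[/eqP->//|/(allP As)]; lia.
    case: (ltnP y w) => yw.
      by move: (Hw3 y yw); rewrite Hyt inE => /orP[/eqP|/(allP As)]; lia.
    lia.
  + subst y; rewrite sI; split.
    * case=> w [Hw1 Hw2 Hw3]; exists w; split.
      -- by rewrite inE Hw1 orbT.
      -- by rewrite inE negb_or Hw2 andbT; apply/negP=> /eqP E; subst w; move/(allP As): Hw1; lia.
      -- by move=> z Hz; rewrite !inE Hw3.
    * case=> w [Hw1 Hw2 Hw3]; exists w.
      have wx : w != x by apply: contraNneq Hw2 => ->; rewrite inE eqxx.
      move: Hw1 Hw2; rewrite !inE (negbTE wx) /= => Hw1 Hw2; split=> // z Hz.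
      have := Hw3 z Hz; rewrite !inE; case: eqP => //= -> _.
      have ->: (x \in s) = false by apply/negbTE/negP=> /(allP As); lia.
      by have ->: (x \in t) = false by apply/negbTE/negP=> /(allP At); lia.
Qed.
Definition skey N (S : {set 'I_N}) : seq nat := [seq nat_of_ord x | x <- enum S].

Lemma skey_sorted N (S : {set 'I_N}) : sorted ltn (skey S).
Proof.
rewrite /skey sorted_map.
have H : sorted (relpre (@nat_of_ord N) ltn) (enum 'I_N).
  by rewrite -sorted_map val_enum_ord iota_ltn_sorted.
rewrite enumT in H; rewrite /enum_mem; apply: sorted_filter => //.
move=> a b c /= ; exact: ltn_trans.
Qed.

Lemma mem_skey N (S : {set 'I_N}) (o : 'I_N) : (nat_of_ord o \in skey S) = (o \in S).
Proof. by rewrite /skey (mem_map val_inj) mem_enum. Qed.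

Lemma mem_skey_lt N (S : {set 'I_N}) y : y \in skey S -> (y < N)%N.
Proof. by case/mapP=> o _ ->. Qed.

Lemma size_skey N (S : {set 'I_N}) : size (skey S) = #|S|.
Proof. by rewrite size_map cardE. Qed.

Lemma skey_inj N (S S' : {set 'I_N}) : skey S = skey S' -> S = S'.
Proof. by move=> E; apply/setP=> o; rewrite -!mem_skey E. Qed.

Lemma setltP N (S S' : {set 'I_N}) : #|S| = #|S'| ->
  lexlt ltn (skey S) (skey S') <->
  exists x : 'I_N, [/\ x \in S, x \notin S' & forall y : 'I_N, (y < x)%N -> (y \in S) = (y \in S')].
Proof.
move=> Hc; rewrite lexlt_natP ?skey_sorted ?size_skey //; split.
- case=> x [H1 H2 H3]; have xN := mem_skey_lt H1.
  exists (Ordinal xN); rewrite -!mem_skey /=; split=> // y Hy.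
  by rewrite -!mem_skey H3.
- case=> x [H1 H2 H3]; exists (nat_of_ord x); rewrite !mem_skey; split=> // y Hy.
  have yN : (y < N)%N by apply: ltn_trans Hy (ltn_ord x).
  by have := H3 (Ordinal yN) Hy; rewrite -!mem_skey.
Qed.

Lemma nth_map_enum (T : Type) n (F : 'I_n -> T) x0 j (Hj : (j < n)%N) :
  nth x0 [seq F i | i <- enum 'I_n] j = F (Ordinal Hj).
Proof.
rewrite (nth_map (Ordinal Hj)) ?size_enum_ord //; congr F; apply: val_inj.
by rewrite /= nth_enum_ord.
Qed.


Lemma mltP M d n (b b' : Bas M d n) :
  mlt b b' <-> exists i : 'I_n, (forall j : 'I_n, (j < i)%N -> b j = b' j) /\
      lexlt ltn (skey (val (b i))) (skey (val (b' i))).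
Proof.
rewrite /mlt /bkey.
change [seq [seq nat_of_ord x | x <- enum (val (b i))] | i <- enum 'I_n] with
  [seq skey (val (b i)) | i <- enum 'I_n].
change [seq [seq nat_of_ord x | x <- enum (val (b' i))] | i <- enum 'I_n] with
  [seq skey (val (b' i)) | i <- enum 'I_n].
split.
- move=> H; have [|i [Hi _ H1 H2]] := lexlt_ex [::] _ H; first by rewrite !size_map.
  rewrite size_map size_enum_ord in Hi.
  exists (Ordinal Hi); split; last by move: H2; rewrite !nth_map_enum.
  move=> j Hj; apply/val_inj/skey_inj.
  have := H1 j Hj; rewrite !(nth_map_enum _ _ (ltn_trans Hj Hi)).
  by have -> : Ordinal (ltn_trans Hj Hi) = j by apply: val_inj.
- case=> i [H1 H2]; apply: (@ex_lexlt _ _ [::] _ _ i); rewrite ?size_map -?enumT ?size_enum_ord //.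
  + move=> j Hj; have jn := ltn_trans Hj (ltn_ord i).
    by rewrite !(nth_map_enum _ _ jn) (H1 (Ordinal jn)).
  + by rewrite !(nth_map_enum _ _ (ltn_ord i)); have -> : Ordinal (ltn_ord i) = i by apply: val_inj.
Qed.

Lemma mlt_irr M d n (b : Bas M d n) : mlt b b = false.
Proof. by rewrite /mlt lexlt_irr // => s; rewrite lexlt_irr // => x; exact: ltnn. Qed.



Section Alg.
Variables (k : comPzRingType) (M : nat).
Import GRing.Theory.
Local Open Scope ring_scope.

Lemma kspan_add d n (S : Pol k M d n -> Prop) x y :
  kspan S x -> kspan S y -> kspan S (padd x y).
Proof.
elim=> [|a x1 y1 Sx1 _ IH] Hy.
  by have -> : padd (pzero k M d n) y = y by apply/ffunP=> b; rewrite !ffunE add0r.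
have -> : padd (padd (pscale a x1) y1) y = padd (pscale a x1) (padd y1 y).
  by apply/ffunP=> b; rewrite !ffunE addrA.
by constructor => //; apply: IH.
Qed.

Lemma kspan_scale d n (S : Pol k M d n -> Prop) a x :
  kspan S x -> kspan S (pscale a x).
Proof.
elim=> [|b x1 y1 Sx1 _ IH].
  have -> : pscale a (pzero k M d n) = pzero k M d n by apply/ffunP=> z; rewrite !ffunE mulr0.
  constructor.
have -> : pscale a (padd (pscale b x1) y1) = padd (pscale (a * b) x1) (pscale a y1).
  by apply/ffunP=> z; rewrite !ffunE mulrDr mulrA.
by constructor.
Qed.

Lemma kspan_gen d n (S : Pol k M d n -> Prop) x : S x -> kspan S x.
Proof.
move=> Sx; have -> : x = padd (pscale 1 x) (pzero k M d n).
  by apply/ffunP=> z; rewrite !ffunE mul1r addr0.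
by constructor => //; constructor.
Qed.

Lemma kspan_sum d n (S : Pol k M d n -> Prop) (T : Type) (s : seq T) (F : T -> Pol k M d n) :
  (forall t, kspan S (F t)) -> kspan S [ffun z => \sum_(t <- s) F t z].
Proof.
move=> HF; elim: s => [|t s IH].
  have -> : [ffun z => \sum_(t <- [::]) F t z] = pzero k M d n.
    by apply/ffunP=> z; rewrite !ffunE big_nil.
  constructor.
have -> : [ffun z => \sum_(t0 <- t :: s) F t0 z] = padd (F t) [ffun z => \sum_(t <- s) F t z].
  by apply/ffunP=> z; rewrite !ffunE big_cons.
exact: kspan_add.
Qed.

Definition Lop d n d' n' (R : Bas M d n -> Bas M d' n' -> bool) (c : Bas M d n -> k)
  (f : Pol k M d n) : Pol k M d' n' :=
  [ffun z => \sum_b (if R b z then c b * f b else 0)].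

Lemma Lop0 d n d' n' R c : @Lop d n d' n' R c (pzero k M d n) = pzero k M d' n'.
Proof. by apply/ffunP=> z; rewrite !ffunE big1 // => b _; rewrite ffunE mulr0; case: ifP. Qed.

Lemma LopD d n d' n' R c a x y : @Lop d n d' n' R c (padd (pscale a x) y) =
  padd (pscale a (Lop R c x)) (Lop R c y).
Proof.
apply/ffunP=> z; rewrite !ffunE mulr_sumr -big_split /=; apply: eq_bigr => b _.
rewrite !ffunE; case: ifP => _; last by rewrite mulr0 addr0.
by rewrite mulrDr mulrCA.
Qed.

Lemma Lop_kspan d n d' n' R c (S : Pol k M d n -> Prop) (S' : Pol k M d' n' -> Prop) p :
  (forall x, S x -> kspan S' (@Lop d n d' n' R c x)) -> kspan S p -> kspan S' (Lop R c p).
Proof.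
move=> H; elim=> [|a x y Sx _ IH]; first by rewrite Lop0; constructor.
by rewrite LopD; apply: kspan_add => //; apply: kspan_scale; apply: H.
Qed.

Lemma monom0 d n (m : Bas M d n) : monom 0 m = pzero k M d n.
Proof. by apply/ffunP=> z; rewrite !ffunE; case: ifP. Qed.

Lemma lead_lemma d n d' n' (R : Bas M d n -> Bas M d' n' -> bool) c (f : Pol k M d n) m :
  (forall b z z', R b z -> R b z' -> z = z') ->
  (forall b b' z z', R b z -> R b' z' -> mlt b b' -> mlt z z') ->
  is_lead f m ->
  Lop R c (monom (f m) m) = pzero k M d' n' \/
  exists z0, is_lead (Lop R c f) z0 /\ Lop R c (monom (f m) m) = monom (Lop R c f z0) z0.
Proof.
move=> Rfun Rmono [fm0 Hlead].
have Lm : forall z, Lop R c (monom (f m) m) z = if R m z then c m * f m else 0.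
  move=> z; rewrite ffunE (bigD1 m) //= ffunE eqxx big1 ?addr0 // => b /negbTE bm.
  by rewrite ffunE bm mulr0; case: ifP.
case: (pickP (R m)) => [z0 Rz0|none]; last first.
  by left; apply/ffunP=> z; rewrite Lm none ffunE.
have Lz0 : Lop R c f z0 = c m * f m.
  rewrite ffunE (bigD1 m) //= Rz0 big1 ?addr0 // => b bm.
  case: (eqVneq (f b) 0) => [->|fb]; first by rewrite mulr0; case: ifP.
  case: (Hlead b fb) => [E|lt]; first by rewrite E eqxx in bm.
  case Rb: (R b z0) => //; have := Rmono _ _ _ _ Rb Rz0 lt; by rewrite mlt_irr.
have Em : Lop R c (monom (f m) m) = monom (Lop R c f z0) z0.
  apply/ffunP=> z; rewrite Lm ffunE Lz0; case: ifP => Rz.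
    by rewrite (Rfun _ _ _ Rz Rz0) eqxx.
  by case: eqP => // E; rewrite E Rz0 in Rz.
case: (eqVneq (Lop R c f z0) 0) => [E|NZ].
  by left; rewrite Em E monom0.
right; exists z0; split=> //; split=> // z' Hz'.
have [b /andP[Rb H]] : exists b, (R b z') && (f b != 0).
  apply/existsP; apply: contraNT Hz' => /existsPn Hn.
  rewrite ffunE big1 // => b _; move: (Hn b); case: (R b z') => //=.
  by move/negPn/eqP->; rewrite mulr0.
case: (Hlead b H) => [E|lt].
  by left; subst b; apply: Rfun Rb Rz0.
by right; apply: Rmono Rb Rz0 lt.
Qed.
End Alg.

Section Alg2.
Variables (k : comPzRingType) (M : nat).
Import GRing.Theory.
Local Open Scope ring_scope.

Lemma Lop_init (I : PIdeal k M) d n d' n' (R : Bas M d n -> Bas M d' n' -> bool) c :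
  (forall b z z', R b z -> R b z' -> z = z') ->
  (forall b b' z z', R b z -> R b' z' -> mlt b b' -> mlt z z') ->
  (forall f, I d n f -> I d' n' (Lop R c f)) ->
  forall p, init_ideal I p -> init_ideal I (Lop R c p).
Proof.
move=> Rfun Rmono HI p; apply: Lop_kspan => _ [f [m [If [Hl ->]]]].
case: (lead_lemma c Rfun Rmono Hl) => [->|[z0 [Hl' ->]]]; first by constructor.
apply: kspan_gen; exists (Lop R c f), z0; split=> //; exact: HI.
Qed.

Definition Rst (g : nat -> nat) d e n (t : Bas M e n) (b : Bas M d n) (z : Bas M (d + e) n) : bool :=
  [forall i, wimg g (b i) (t i) == val (z i)].
Definition cst (g : nat -> nat) d e n (t : Bas M e n) (c : k) (b : Bas M d n) : k :=
  (-1) ^+ (\sum_(i < n) winv g (b i) (t i)) * c.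

Lemma pstar_monom g d e n (f : Pol k M d n) c (t : Bas M e n) : gfits M g d e ->
  pstar g f (monom c t) = Lop (Rst g t) (cst g t c) f.
Proof.
move=> gf; apply/ffunP=> z; rewrite !ffunE gf; apply: eq_bigr => b1 _.
rewrite (bigD1 t) //= [X in _ + X = _]big1 ?addr0; last first.
  by move=> b2 /negbTE nb; rewrite ffunE nb mulr0; case: ifP.
rewrite ffunE eqxx /Rst /cst; case: ifP => // _.
by rewrite -!mulrA (mulrC (f b1)).
Qed.

Lemma pstar_nofit g d e n (f : Pol k M d n) (h : Pol k M e n) : ~~ gfits M g d e ->
  pstar g f h = pzero k M (d + e) n.
Proof. by move/negbTE=> gf; apply/ffunP=> z; rewrite !ffunE gf. Qed.

Lemma pstar_sum g d e n (f : Pol k M d n) (h : Pol k M e n) :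
  pstar g f h = [ffun z => \sum_(t <- index_enum (Bas M e n)) pstar g f (monom (h t) t) z].
Proof.
apply/ffunP=> z; rewrite !ffunE.
case gf: (gfits M g d e); last by rewrite big1 // => t _; rewrite ffunE gf.
rewrite exchange_big /=; apply: eq_bigr => t _.
rewrite (pstar_monom f (h t) t gf) ffunE; apply: eq_bigr => b1 _.
rewrite /Rst /cst; case: ifP => // _.
by rewrite -!mulrA (mulrC (f b1)).
Qed.
End Alg2.

Section GI.
Variables (M : nat) (g : nat -> nat) (d e : nat).
Hypothesis gf : gfits M g d e.
Hypothesis sg : strictly_increasing g.

Lemma gI_val (x : 'I_(M * d)) : nat_of_ord (gI g e x) = g x.
Proof. by rewrite /gI val_insubd (forallP gf x). Qed.

Lemma gI_lt (x y : 'I_(M * d)) : (gI g e x < gI g e y)%N = (x < y)%N.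
Proof.
rewrite !gI_val; apply/idP/idP; last exact: sg.
case: (ltngtP x y) => // [H|/val_inj->]; last by rewrite ltnn.
by move/(ltn_trans (sg H)); rewrite ltnn.
Qed.

Lemma gI_inj : injective (@gI M g d e).
Proof.
move=> x y E; apply/val_inj; case: (ltngtP x y) => // H.
- by have := gI_lt x y; rewrite E ltnn H.
- by have := gI_lt y x; rewrite E ltnn H.
Qed.

Lemma gcI_notin (t : 'I_(M * e)) : gcI g d t \notin gimg M g d e.
Proof.
have Hc : #|~: gimg M g d e| = (M * e)%N.
  have := cardsC (gimg M g d e); rewrite card_ord /gimg card_imset; last exact: gI_inj.
  by rewrite [#|'I_(M * d)|]card_ord => H; have E := mulnDr M d e; lia.
have : gcI g d t \in enum (~: gimg M g d e).
  by rewrite /gcI mem_nth // -cardE Hc.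
by rewrite mem_enum inE.
Qed.

Lemma wimg_lt (S S' : dsub M d) (T : dsub M e) (x : 'I_(M * d)) :
  x \in val S -> x \notin val S' -> (forall y : 'I_(M * d), (y < x)%N -> (y \in val S) = (y \in val S')) ->
  [/\ gI g e x \in wimg g S T, gI g e x \notin wimg g S' T &
      forall y : 'I_(M * (d + e)), (y < gI g e x)%N -> (y \in wimg g S T) = (y \in wimg g S' T)].
Proof.
move=> H1 H2 H3; rewrite /wimg; split.
- by rewrite in_setU imset_f.
- rewrite in_setU negb_or (mem_imset _ _ gI_inj) H2 /=; apply/imsetP=> [[u _ E]].
  by have := gcI_notin u; rewrite -E /gimg imset_f.
- move=> y Hy; rewrite !in_setU; congr orb.
  have sub : forall A : {set 'I_(M * d)}, y \in [set gI g e s | s in A] -> y \in gimg M g d e.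
    by move=> A /imsetP[s _ ->]; rewrite /gimg imset_f.
  case Hg: (y \in gimg M g d e); last first.
    by apply/idP/idP => /sub; rewrite Hg.
  case/imsetP: Hg => s _ E; rewrite E in Hy *; rewrite !(mem_imset _ _ gI_inj); apply: H3.
  by move: Hy; rewrite gI_lt.
Qed.
End GI.

Lemma Rst_fun M g d e n (t : Bas M e n) (b : Bas M d n) z z' :
  Rst g t b z -> Rst g t b z' -> z = z'.
Proof.
move=> /forallP H /forallP H'; apply/ffunP=> i; apply/val_inj.
by rewrite -(eqP (H i)) (eqP (H' i)).
Qed.

Lemma Rst_mono M g d e n (t : Bas M e n) (b b' : Bas M d n) z z' :
  gfits M g d e -> strictly_increasing g ->
  Rst g t b z -> Rst g t b' z' -> mlt b b' -> mlt z z'.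
Proof.
move=> gf sg /forallP H /forallP H' /mltP[i [Hj Hi]]; apply/mltP; exists i; split.
  move=> j ji; apply/val_inj; rewrite -(eqP (H j)) -(eqP (H' j)) Hj //.
move: Hi; rewrite !setltP ?(eqP (valP (b i))) ?(eqP (valP (b' i))) ?(eqP (valP (z i))) ?(eqP (valP (z' i))) //.
case=> x [H1 H2 H3]; exists (gI g e x).
rewrite -(eqP (H i)) -(eqP (H' i)).
by have [] := wimg_lt gf sg (t i) H1 H2 H3.
Qed.

Lemma enum_sorted N (S : {set 'I_N}) : sorted (relpre (@nat_of_ord N) ltn) (enum S).
Proof.
have H : sorted (relpre (@nat_of_ord N) ltn) (enum 'I_N).
  by rewrite -sorted_map val_enum_ord iota_ltn_sorted.
rewrite enumT in H; rewrite /enum_mem; apply: sorted_filter => //.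
move=> a b c /= ; exact: ltn_trans.
Qed.

Section Split.
Variables (n m : nat) (A : {set 'I_(n + m)}).
Hypothesis cA : #|A| = n.

Lemma size_enumA : size (enum A) = n.
Proof. by rewrite -cardE. Qed.
Lemma size_enumC : size (enum (~: A)) = m.
Proof. by have := cardsC A; rewrite cardE size_enumA card_ord -cardE; lia. Qed.

Lemma cover p : (exists x, p = iA A x) \/ (exists y, p = jB A y).
Proof.
case pA: (p \in A).
  left; have Hi : (index p (enum A) < n)%N by move: (index_mem p (enum A)); rewrite mem_enum pA size_enumA.
  exists (Ordinal Hi); rewrite /iA /= nth_index // mem_enum //.
right; have Hi : (index p (enum (~: A)) < m)%N by move: (index_mem p (enum (~: A))); rewrite mem_enum inE pA size_enumC.
exists (Ordinal Hi); rewrite /jB /= nth_index // mem_enum inE pA //.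
Qed.

Lemma jB_lt (y y' : 'I_m) : (y < y')%N -> (jB A y < jB A y')%N.
Proof.
move=> H; rewrite /jB (set_nth_default (rshift n y') (rshift n y)) ?size_enumC //.
have := @sorted_ltn_nth _ (relpre (@nat_of_ord _) ltn) (fun b a c H1 H2 => ltn_trans H1 H2) (rshift n y') _ (enum_sorted (~: A)).
by apply; rewrite ?inE /= ?size_enumC.
Qed.

Lemma jB_ltE (y y' : 'I_m) : (jB A y < jB A y')%N -> (y < y')%N.
Proof.
case: (ltngtP y y') => // [H|/val_inj->]; last by rewrite ltnn.
by move/(ltn_trans (jB_lt H)); rewrite ltnn.
Qed.
End Split.

Section Alg3.
Variables (k : comPzRingType) (M : nat).
Import GRing.Theory.
Local Open Scope ring_scope.

Definition Rsp d n m (A : {set 'I_(n + m)}) (mu : Bas M d n) (b : Bas M d m)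
  (z : Bas M d (n + m)) : bool :=
  ([ffun x => z (iA A x)] == mu) && ([ffun x => z (jB A x)] == b).

Lemma psplit_monom d n m (A : {set 'I_(n + m)}) (cu : k) (mu : Bas M d n) (w : Pol k M d m) :
  psplit A (monom cu mu) w = Lop (Rsp A mu) (fun _ => cu) w.
Proof.
apply/ffunP=> z; rewrite ffunE [RHS]ffunE (bigD1 [ffun x => z (jB A x)]) //= [X in _ = _ + X]big1 ?addr0.
  by rewrite /Rsp eqxx andbT ffunE; case: eqP; rewrite ?mul0r.
by move=> b /negbTE nb; rewrite /Rsp [_ == b]eq_sym nb andbF.
Qed.

Lemma psplit_sum d n m (A : {set 'I_(n + m)}) (u : Pol k M d n) (w : Pol k M d m) :
  psplit A u w = [ffun z => \sum_(t <- index_enum (Bas M d n)) psplit A (monom (u t) t) w z].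
Proof.
apply/ffunP=> z; rewrite !ffunE (bigD1 [ffun x => z (iA A x)]) //= [X in _ = _ + X]big1 ?addr0.
  by rewrite !ffunE eqxx.
by move=> t /negbTE nt; rewrite !ffunE eq_sym nt mul0r.
Qed.

Lemma Rsp_fun d n m (A : {set 'I_(n + m)}) (mu : Bas M d n) b z z' : #|A| = n ->
  Rsp A mu b z -> Rsp A mu b z' -> z = z'.
Proof.
move=> cA /andP[/eqP H1 /eqP H2] /andP[/eqP H1' /eqP H2']; apply/ffunP=> p.
case: (cover cA p) => [[x ->]|[y ->]].
  by rewrite -[z _](ffunE (fun x => z (iA A x))) -[z' _](ffunE (fun x => z' (iA A x))) H1 H1'.
by rewrite -[z _](ffunE (fun x => z (jB A x))) -[z' _](ffunE (fun x => z' (jB A x))) H2 H2'.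
Qed.

Lemma Rsp_mono d n m (A : {set 'I_(n + m)}) (mu : Bas M d n) b b' z z' : #|A| = n ->
  Rsp A mu b z -> Rsp A mu b' z' -> mlt b b' -> mlt z z'.
Proof.
move=> cA /andP[/eqP H1 /eqP H2] /andP[/eqP H1' /eqP H2'] /mltP[i [Hj Hi]].
have zj : forall y, z (jB A y) = b y by move=> y; rewrite -H2 ffunE.
have zj' : forall y, z' (jB A y) = b' y by move=> y; rewrite -H2' ffunE.
apply/mltP; exists (jB A i); split; last by rewrite zj zj'.
move=> p; case: (cover cA p) => [[x ->]|[y ->]] Hp.
  by rewrite -[z _](ffunE (fun x => z (iA A x))) -[z' _](ffunE (fun x => z' (iA A x))) H1 H1'.
by rewrite zj zj' Hj //; apply: jB_ltE Hp.
Qed.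
End Alg3.

Lemma init_is_ideal (k : comPzRingType) (M : nat) (I : PIdeal k M) :
  is_ideal I -> is_ideal (init_ideal I).
Proof.
case=> I0 ID IS IP IM; split.
- move=> d n; exact: kspan0.
- move=> d n f h; exact: kspan_add.
- move=> d n a f; exact: kspan_scale.
- move=> g d e n f h sg Hf.
  case gf: (gfits M g d e); last by rewrite pstar_nofit ?gf //; exact: kspan0.
  rewrite pstar_sum; apply: kspan_sum => t; rewrite pstar_monom //.
  apply: (Lop_init (@Rst_fun M g d e n t)) => //.
  + by move=> b b' z z'; apply: Rst_mono.
  + by move=> f' If'; rewrite -pstar_monom //; apply: IP.
- move=> d n m A h f cA Hf.
  rewrite psplit_sum; apply: kspan_sum => t; rewrite psplit_monom.
  apply: Lop_init => //.
  + by move=> b z z'; apply: Rsp_fun.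
  + by move=> b b' z z'; apply: Rsp_mono.
  + by move=> f' If'; rewrite -psplit_monom; apply: IM.
Qed.

Theorem mainTheorem10 (k : comPzRingType) (M : nat) (I : PIdeal k M) :
  noetherian k -> is_ideal I -> monomial_ideal (init_ideal I).
Proof.
move=> _ HI; have HJ := init_is_ideal HI.
exists (fun d n p => init_ideal I p /\ is_monomial p); split.
  by move=> d n p [].
move=> d n f; split.
- move=> Hf J [J0 JD JS _ _] HG; elim: Hf => [|a x y Sx _ IH]; first exact: J0.
  apply: JD => //; apply: JS; apply: HG; split; first exact: kspan_gen.
  by case: Sx => f' [m [_ [_ ->]]]; exists (f' m), m.
- by move=> Hf; apply: Hf => // d' n' p [].
Qed.
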